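(* Let $n > 2k+1$. There exists a deterministic algorithm that, on every instance with $n$ elements of which $k$ are corrupted, outputs a set of exactly $2k+1$ elements containing the uncorrupted maximum, using exactly $(n-(k+1))(2k+1) = 2nk + (n - 2k^2 - 3k - 1)$ comparison queries.
   Context: Model: there are $n$ elements $x_1,\dots,x_n$, exactly $k$ of which are corrupted (unknown to the algorithm). For every pair of distinct elements the comparison graph (a tournament) specifies which one is larger. The comparison graph restricted to the $n-k$ uncorrupted elements is acyclic; comparisons involving corrupted elements may be oriented arbitrarily. The uncorrupted maximum is the uncorrupted element larger than every other uncorrupted element. An algorithm knows $n$ and $k$, may query the orientation of any pair (a comparison query), and outputs a set of elements. *)

(* Defs.v *)
From mathcomp Require Import all_boot.
Set Implicit Arguments. Unset Strict Implicit. Unset Printing Implicit Defensive.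

(* The comparison graph on elements 'I_n: [gt x y] means "x is larger than y". *)
Definition tournament (n : nat) (gt : rel 'I_n) : Prop :=
  (forall x, gt x x = false) /\
  (forall x y, x != y -> gt x y = ~~ gt y x).

Definition acyclic_on (n : nat) (gt : rel 'I_n) (U : {set 'I_n}) : Prop :=
  ~ (exists (x : 'I_n) (s : seq 'I_n),
        all (fun y => y \in U) (x :: s) /\ path gt x s /\ gt (last x s) x).

Definition uncorrupted_max (n : nat) (gt : rel 'I_n) (C : {set 'I_n}) (u : 'I_n) : Prop :=
  u \notin C /\ (forall v, v \notin C -> v != u -> gt u v).

(* Deterministic adaptive comparison algorithms = decision trees.
   [Query i j t f] asks the orientation of the pair (i,j) and continues with
   [t] if i is larger than j, with [f] otherwise. [Leaf S] outputs S. *)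
Inductive alg (n : nat) : Type :=
| Leaf : {set 'I_n} -> alg n
| Query : 'I_n -> 'I_n -> alg n -> alg n -> alg n.

Fixpoint output (n : nat) (gt : rel 'I_n) (A : alg n) : {set 'I_n} :=
  match A with
  | Leaf X => X
  | Query i j t f => if gt i j then output gt t else output gt f
  end.

Fixpoint queries (n : nat) (gt : rel 'I_n) (A : alg n) : nat :=
  match A with
  | Leaf _ => 0
  | Query i j t f => (if gt i j then queries gt t else queries gt f).+1
  end.

(* Main.v *)
Require Import Defs.
From mathcomp Require Import all_boot.
From mathcomp Require Import zify.
Set Implicit Arguments. Unset Strict Implicit. Unset Printing Implicit Defensive.

Definition upd n (kn : rel 'I_n) (x s : 'I_n) (b : bool) : rel 'I_n :=
  fun a c => if (a == x) && (c == s) then b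
             else if (a == s) && (c == x) then ~~ b else kn a c.

Fixpoint ins n (x : 'I_n) (T : seq 'I_n) (kn : rel 'I_n) (cont : rel 'I_n -> alg n) : alg n :=
  match T with
  | [::] => cont kn
  | s :: T' => Query x s (ins x T' (upd kn x s true) cont) (ins x T' (upd kn x s false) cont)
  end.

Definition losses n (kn : rel 'I_n) (X : seq 'I_n) (a : 'I_n) := count (fun b => kn b a) X.

Definition step n (k : nat) (x : 'I_n) (S : seq 'I_n) (kn : rel 'I_n) : seq 'I_n :=
  if 2 * k + 1 < size (x :: S)
  then rem (nth x (x :: S) (find (fun a => k < losses kn (x :: S) a) (x :: S))) (x :: S)
  else x :: S.

Fixpoint run n k (L S : seq 'I_n) (kn : rel 'I_n) : alg n :=
  match L with
  | [::] => Leaf [set x in S]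
  | x :: L' => ins x S kn (fun kn' => run k L' (step k x S kn') kn')
  end.

Fixpoint insk n (gt : rel 'I_n) x T kn :=
  match T with [::] => kn | s :: T' => insk gt x T' (upd kn x s (gt x s)) end.

Lemma ins_output n (gt : rel 'I_n) x T kn cont :
  output gt (ins x T kn cont) = output gt (cont (insk gt x T kn)).
Proof. by elim: T kn => [|s T IH] kn //=; case: (gt x s). Qed.

Lemma ins_queries n (gt : rel 'I_n) x T kn cont :
  queries gt (ins x T kn cont) = size T + queries gt (cont (insk gt x T kn)).
Proof. by elim: T kn => [|s T IH] kn //=; case: (gt x s); rewrite IH addSn. Qed.

Lemma insk_spec n (gt : rel 'I_n) x T kn a b :
  tournament gt -> x \notin T ->
  insk gt x T kn a b =
   if (a == x) && (b \in T) then gt a b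
   else if (b == x) && (a \in T) then gt a b else kn a b.
Proof.
move=> [irr tor]; elim: T kn => [|s T IH] kn /=; first by rewrite !in_nil !andbF.
rewrite in_cons negb_or => /andP [xs xT].
rewrite IH // /upd ?in_cons.
case: (eqVneq a x) => [->|ax]; case: (eqVneq b x) => [->|bx] /=.
- by rewrite (negbTE xT) (negbTE xs).
- rewrite andbF; case: (b \in T); first by rewrite orbT.
  by case: eqVneq => [->|].
- rewrite andbT; case: (a \in T); first by rewrite orbT.
  case: eqVneq => [->|] //=; have sx : s != x by rewrite eq_sym.
  by rewrite (tor _ _ sx).
- by rewrite andbF.
Qed.

Lemma count_tour n (gt : rel 'I_n) y Y : tournament gt -> y \notin Y ->
  count (fun b => gt b y) Y + count (fun b => gt y b) Y = size Y.
Proof.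
move=> [irr tor] yY; rewrite -(count_predC (fun b => gt b y) Y); congr (_ + _).
apply: eq_in_count => b bY /=.
have yb : y != b by apply: contraNneq yY => ->.
by rewrite (tor _ _ yb).
Qed.

Lemma sumn_mapD (T : Type) (f g : T -> nat) s :
  sumn [seq f a + g a | a <- s] = sumn (map f s) + sumn (map g s).
Proof. by elim: s => //= a s ->; lia. Qed.

Lemma sumn_bound (T : Type) (f : T -> nat) s k :
  (forall a, f a <= k) -> sumn (map f s) <= size s * k.
Proof. move=> H; elim: s => //= a s IH; have := H a; lia. Qed.

Lemma sum_losses n (gt : rel 'I_n) X : tournament gt -> uniq X ->
  2 * sumn [seq count (fun b => gt b a) X | a <- X] = size X * (size X).-1.
Proof.
move=> T; elim: X => //= y Y IH /andP [yY uY].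
have [irr _] := T.
rewrite irr /= add0n.
rewrite sumn_mapD.
have -> : sumn [seq nat_of_bool (gt y a) | a <- Y] = count (fun b => gt y b) Y.
  by rewrite -sumn_count.
have := count_tour T yY; have := IH uY.
case: (size Y) => [|s]; lia.
Qed.

Lemma step_spec n k (gt : rel 'I_n) (C : {set 'I_n}) u x S kn p :
  tournament gt -> #|C| = k -> uncorrupted_max gt C u ->
  uniq (x :: S) -> size S = minn p (2 * k + 1) ->
  (forall a b, a \in x :: S -> b \in x :: S -> kn a b = gt a b) ->
  [/\ u \in x :: S -> u \in step k x S kn, {subset step k x S kn <= x :: S},
      uniq (step k x S kn) & size (step k x S kn) = minn p.+1 (2 * k + 1)].
Proof.
move=> T cC [uC umax] uX hS agr.
have [irr tor] := T.
rewrite /step; case: ifP => hs; last first.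
  split => //; move/negbT: hs; rewrite -leqNgt /= => hs; rewrite hS in hs *; lia.
set X := x :: S in uX agr hs *.
set P := fun a => k < losses kn X a.
have lossE : forall a, a \in X -> losses kn X a = count (fun b => gt b a) X.
  by move=> a aX; apply: eq_in_count => b bX; rewrite agr.
have hP : has P X.
  apply/negPn/negP => /hasPn H.
  have Hb : sumn [seq losses kn X a | a <- X] <= size X * k.
    have -> : [seq losses kn X a | a <- X] = [seq minn (losses kn X a) k | a <- X].
      apply/eq_in_map => a aX; have := H a aX; rewrite /P; lia.
    by apply: sumn_bound => a; lia.
  have := sum_losses T uX.
  have -> : [seq count (fun b => gt b a) X | a <- X] = [seq losses kn X a | a <- X].
    by apply/eq_in_map => a aX; rewrite lossE.
  have hs2 : 2 * k + 1 < size X := hs; move: Hb hs2; generalize (sumn [seq losses kn X a | a <- X]) (size X) => z sz; nia.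
set v := nth x X (find P X).
have vX : v \in X by apply: mem_nth; rewrite -has_find.
have Pv : P v by apply: nth_find.
have vu : v != u.
  apply/eqP => vu; move: Pv; rewrite /P vu lossE; last by rewrite -vu.
  have h1 : count (fun b => gt b u) X <= count (mem C) X.
    apply: sub_count => b /= gbu; apply/negPn/negP => bC.
    case: (eqVneq b u) => [bu|bu]; first by move: gbu; rewrite bu irr.
    have := umax b bC bu; rewrite (tor u b) ?gbu //; by rewrite eq_sym.
  have h2 : count (mem C) X <= #|C|.
    rewrite -size_filter -(card_uniqP (filter_uniq _ uX)).
    by apply: subset_leq_card; apply/subsetP => b; rewrite mem_filter => /andP [].
  lia.
split.
- by move=> uX'; rewrite (mem_rem_uniq _ uX) /= inE uX' eq_sym vu.
- by move=> b /mem_rem.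
- exact: rem_uniq.
- rewrite size_rem //; move: hs => /=; rewrite hS; lia.
Qed.

Fixpoint qs (m p l : nat) : nat :=
  match l with 0 => 0 | l'.+1 => minn p m + qs m p.+1 l' end.

Lemma qsA m p l : m <= p -> qs m p l = l * m.
Proof. elim: l p => //= l IH p hp; rewrite IH; lia. Qed.

Lemma qsB m l d p : p + d = m -> 2 * qs m p (d + l) = m * (m - 1) - p * (p - 1) + 2 * l * m.
Proof.
elim: d p => [|d IH] p hp.
  rewrite add0n qsA; [|lia]; rewrite -hp addn0; lia.
rewrite addSn /= mulnDr IH; last lia.
have hm : p < m by lia.
have e1 : minn p m = p by lia.
rewrite e1.
have e2 : m * (m - 1) >= p.+1 * (p.+1 - 1) by apply: leq_mul; lia.
move: e2; case: p hp hm e1 => [|p] hp hm e1 e2; nia.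
Qed.

Lemma qs_final n k : 2 * k + 1 < n -> qs (2 * k + 1) 0 n = (n - (k + 1)) * (2 * k + 1).
Proof.
move=> h.
have := @qsB (2 * k + 1) (n - (2 * k + 1)) (2 * k + 1) 0 (add0n _).
have -> : 2 * k + 1 + (n - (2 * k + 1)) = n by lia.
have -> : n - (k + 1) = k + (n - (2 * k + 1)) by lia.
move: (n - (2 * k + 1)) => d; rewrite muln0 subn0 => E.
have e : (2 * k + 1) * (2 * k + 1 - 1) = 2 * (k * (2 * k + 1)).
  rewrite addnK; lia.
rewrite e in E; nia.
Qed.

Lemma run_spec n k (gt : rel 'I_n) (C : {set 'I_n}) u :
  tournament gt -> #|C| = k -> uncorrupted_max gt C u ->
  forall L S kn p,
  uniq (L ++ S) -> size S = minn p (2 * k + 1) ->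
  (forall a b, a \in S -> b \in S -> kn a b = gt a b) ->
  (forall a, kn a a = false) ->
  u \in L ++ S ->
  exists Sf, [/\ output gt (run k L S kn) = [set x in Sf], uniq Sf, u \in Sf,
     size Sf = minn (p + size L) (2 * k + 1) &
     queries gt (run k L S kn) = qs (2 * k + 1) p (size L)].
Proof.
move=> T cC um.
have [irr tor] := T.
elim=> [|x L IH] S kn p uLS hS agr diag uin.
  by exists S; split => //; rewrite addn0.
move: uLS; rewrite cat_cons /= mem_cat negb_or => /andP [/andP [xL xS] uLS].
have uLS' := uLS; move: uLS'; rewrite cat_uniq => /and3P [uL dLS uS].
rewrite /= ins_output ins_queries.
set kn' := insk gt x S kn.
have uX : uniq (x :: S) by rewrite /= xS.
have agr' : forall a b, a \in x :: S -> b \in x :: S -> kn' a b = gt a b.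
  move=> a b; rewrite !inE /kn' => /orP [/eqP -> | aS] /orP [/eqP -> | bS];
    rewrite insk_spec //.
  - by rewrite eqxx (negbTE xS) /= diag irr.
  - by rewrite eqxx bS.
  - have ax : a != x by apply: contraNneq xS => <-.
    by rewrite (negbTE ax) eqxx aS.
  - have ax : a != x by apply: contraNneq xS => <-.
    have bx : b != x by apply: contraNneq xS => <-.
    by rewrite (negbTE ax) (negbTE bx) /= agr.
have diag' : forall a, kn' a a = false.
  move=> a; rewrite /kn' insk_spec //.
  by case: (eqVneq a x) => [->|_]; rewrite /= ?(negbTE xS) ?diag.
have [hu hsub huq hsz] := step_spec (p := p) T cC um uX hS agr'.
set S' := step k x S kn' in hu hsub huq hsz *.
have P1 : uniq (L ++ S').
  rewrite cat_uniq uL huq andbT /=; apply/hasPn => y yS'.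
  have := hsub y yS'; rewrite inE => /orP [/eqP -> // | yS].
  exact: (hasPn dLS y yS).
have P3 : forall a b, a \in S' -> b \in S' -> kn' a b = gt a b.
  by move=> a b aS bS; apply: agr'; apply: hsub.
have P5 : u \in L ++ S'.
  move: uin; rewrite inE mem_cat => /orP [ux| /orP [uL' | uS']].
  + by rewrite mem_cat; apply/orP; right; apply: hu; rewrite inE ux.
  + by rewrite mem_cat uL'.
  + by rewrite mem_cat; apply/orP; right; apply: hu; rewrite inE uS' orbT.
have [Sf [o1 o2 o3 o4 o5]] := IH S' kn' p.+1 P1 hsz P3 diag' P5.
exists Sf; split => //.
- by rewrite o4 /= addSnnS.
- by rewrite o5 /= hS.
Qed.

Theorem mainTheorem4 (n k : nat) (hnk : 2 * k + 1 < n) :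
  exists A : alg n,
    forall (gt : rel 'I_n) (C : {set 'I_n}),
      tournament gt -> #|C| = k -> acyclic_on gt (~: C) ->
      forall u : 'I_n, uncorrupted_max gt C u ->
        [/\ #|output gt A| = 2 * k + 1, u \in output gt A &
            queries gt A = (n - (k + 1)) * (2 * k + 1)].
Proof.
exists (run k (enum 'I_n) [::] (fun _ _ => false)).
move=> gt C T cC _ u um.
have Q1 : uniq (enum 'I_n ++ [::]) by rewrite cats0 enum_uniq.
have Q2 : size ([::] : seq 'I_n) = minn 0 (2 * k + 1) by rewrite min0n.
have Q3 : forall a b : 'I_n, a \in [::] -> b \in [::] -> false = gt a b by [].
have Q5 : u \in enum 'I_n ++ [::] by rewrite cats0 mem_enum.
have [Sf [o1 o2 o3 o4 o5]] := @run_spec n k gt C u T cC um (enum 'I_n) [::] (fun _ _ => false) 0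
  Q1 Q2 Q3 (fun _ => erefl) Q5.
rewrite o1 o5 size_enum_ord qs_final //; split => //.
- by rewrite cardsE (card_uniqP o2) o4 size_enum_ord add0n; lia.
- by rewrite inE.
Qed.
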